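(* Let $A,B$ be closed densely defined operators in $\mathcal H$ and $G$ a bounded metric operator such that $GD(A)\subseteq D(B)$ and $BG\xi=GA\xi$ for all $\xi\in D(A)$. Let $A^\star$ be defined by $D(A^\star)=\{\eta\in\mathcal H: G\eta\in D(A^* ),\ A^*G\eta\in D(G^{-1})\}$, $A^\star\eta=G^{-1}A^*G\eta$. Then $A^\star$ is densely defined, and $B_0:=(A^\star)^*$ satisfies $GD(A)\subseteq D(B_0)$ and $B_0G\xi=GA\xi$ for all $\xi\in D(A)$; moreover $B_0\subseteq B'$ for every closed operator $B'$ satisfying $GD(A)\subseteq D(B')$ and $B'G\xi=GA\xi$ for all $\xi\in D(A)$ (so $B_0$ is minimal among such closed operators), and $GD(A)$ is a core for $B_0$.
   Context: A metric operator in $\mathcal H$ is a self-adjoint operator $G$ with $\langle G\xi,\xi\rangle>0$ for all nonzero $\xi\in D(G)$; $G^{-1}$ denotes its (possibly unbounded) inverse. $A^*$ denotes the Hilbert space adjoint. *)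

(* Defs.v *)
From Stdlib Require Import Reals ClassicalEpsilon.
Open Scope R_scope.

Record C := mkC { Re : R; Im : R }.
Definition C0 : C := mkC 0 0.
Definition Cadd (a b : C) : C := mkC (Re a + Re b) (Im a + Im b).
Definition Cmul (a b : C) : C :=
  mkC (Re a * Re b - Im a * Im b) (Re a * Im b + Im a * Re b).
Definition Cconj (a : C) : C := mkC (Re a) (- Im a).
Definition Cneg1 : C := mkC (-1) 0.

Record Hilbert := {
  carrier :> Type;
  hzero : carrier;
  hadd : carrier -> carrier -> carrier;
  hscal : C -> carrier -> carrier;
  inner : carrier -> carrier -> C;
  hadd_assoc : forall x y z, hadd x (hadd y z) = hadd (hadd x y) z;
  hadd_comm : forall x y, hadd x y = hadd y x;
  hadd_zero : forall x, hadd x hzero = x;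
  hadd_opp : forall x, hadd x (hscal Cneg1 x) = hzero;
  hscal_one : forall x, hscal (mkC 1 0) x = x;
  hscal_assoc : forall a b x, hscal a (hscal b x) = hscal (Cmul a b) x;
  hscal_addr : forall a x y, hscal a (hadd x y) = hadd (hscal a x) (hscal a y);
  hscal_addl : forall a b x, hscal (Cadd a b) x = hadd (hscal a x) (hscal b x);
  inner_addl : forall x y z, inner (hadd x y) z = Cadd (inner x z) (inner y z);
  inner_scall : forall a x z, inner (hscal a x) z = Cmul a (inner x z);
  inner_conj : forall x y, inner y x = Cconj (inner x y);
  inner_pos : forall x, 0 <= Re (inner x x);
  inner_def : forall x, inner x x = C0 -> x = hzero;
  hcomplete : forall u : nat -> carrier,
    (forall eps, 0 < eps -> exists N, forall m n, (N <= m)%nat -> (N <= n)%nat ->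
       sqrt (Re (inner (hadd (u m) (hscal Cneg1 (u n))) (hadd (u m) (hscal Cneg1 (u n)))))
         < eps) ->
    exists l, forall eps, 0 < eps -> exists N, forall n, (N <= n)%nat ->
       sqrt (Re (inner (hadd (u n) (hscal Cneg1 l)) (hadd (u n) (hscal Cneg1 l)))) < eps
}.

Arguments hzero {h}.
Arguments hadd {h}.
Arguments hscal {h}.
Arguments inner {h}.

Section Ops.
Variable H : Hilbert.

Definition hsub (x y : H) : H := hadd x (hscal Cneg1 y).
Definition hnorm (x : H) : R := sqrt (Re (inner x x)).

Definition converges (u : nat -> H) (l : H) : Prop :=
  forall eps, 0 < eps -> exists N, forall n, (N <= n)%nat -> hnorm (hsub (u n) l) < eps.

(* A (possibly unbounded) operator: a domain and an action (meaningful on the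
   domain only). *)
Record Op := mkOp { dom : H -> Prop; app : H -> H }.

Definition linear_op (T : Op) : Prop :=
  dom T hzero /\
  (forall x y, dom T x -> dom T y -> dom T (hadd x y) /\
       app T (hadd x y) = hadd (app T x) (app T y)) /\
  (forall a x, dom T x -> dom T (hscal a x) /\ app T (hscal a x) = hscal a (app T x)).

Definition densely_defined (T : Op) : Prop :=
  forall x eps, 0 < eps -> exists y, dom T y /\ hnorm (hsub x y) < eps.

Definition closed_op (T : Op) : Prop :=
  forall (u : nat -> H) x y, (forall n, dom T (u n)) ->
    converges u x -> converges (fun n => app T (u n)) y ->
    dom T x /\ app T x = y.

Definition op_incl (T S : Op) : Prop :=
  forall x, dom T x -> dom S x /\ app S x = app T x.

Definition adjoint (T : Op) : Op :=
  mkOp (fun eta => exists z, forall xi, dom T xi -> inner (app T xi) eta = inner xi z)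
       (fun eta => epsilon (inhabits hzero)
          (fun z => forall xi, dom T xi -> inner (app T xi) eta = inner xi z)).

Definition self_adjoint (T : Op) : Prop :=
  (forall x, dom (adjoint T) x <-> dom T x) /\
  (forall x, dom T x -> app (adjoint T) x = app T x).

Definition metric_operator (G : Op) : Prop :=
  linear_op G /\ self_adjoint G /\
  (forall x, dom G x -> x <> hzero -> 0 < Re (inner (app G x) x)).

Definition bounded_op (G : Op) : Prop :=
  (forall x, dom G x) /\ exists M, forall x, hnorm (app G x) <= M * hnorm x.

Definition op_inverse (G : Op) : Op :=
  mkOp (fun y => exists x, dom G x /\ app G x = y)
       (fun y => epsilon (inhabits hzero) (fun x => dom G x /\ app G x = y)).

Definition star_op (G A : Op) : Op :=
  mkOp (fun eta => dom (adjoint A) (app G eta) /\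
                   dom (op_inverse G) (app (adjoint A) (app G eta)))
       (fun eta => app (op_inverse G) (app (adjoint A) (app G eta))).

Definition is_core (T : Op) (D : H -> Prop) : Prop :=
  (forall x, D x -> dom T x) /\
  (forall x, dom T x -> exists u : nat -> H, (forall n, D (u n)) /\
      converges u x /\ converges (fun n => app T (u n)) (app T x)).

Definition intertwines (G A B : Op) : Prop :=
  forall xi, dom A xi -> dom B (app G xi) /\ app B (app G xi) = app G (app A xi).

End Ops.

Arguments mkOp {H}.
Arguments dom {H}.
Arguments app {H}.

(* Main.v *)
From Stdlib Require Import Reals Lra ClassicalEpsilon Classical Lia.
Require Import Defs.
Open Scope R_scope.

Lemma Ceq (a b : C) : Re a = Re b -> Im a = Im b -> a = b.
Proof. destruct a, b; simpl; intros; subst; reflexivity. Qed.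

Ltac cq := apply Ceq; simpl; try ring.

Lemma hscal_C0 {X : Hilbert} (x : X) : hscal C0 x = hzero.
Proof.
  assert (E : hadd (hscal C0 x) x = x).
  { rewrite <- (hscal_one X x) at 2. rewrite <- hscal_addl.
    replace (Cadd C0 (mkC 1 0)) with (mkC 1 0) by cq. apply hscal_one. }
  rewrite <- (hadd_zero X (hscal C0 x)). rewrite <- (hadd_opp X x).
  rewrite hadd_assoc, E. reflexivity.
Qed.

Lemma inner_zero_l {X : Hilbert} (y : X) : inner hzero y = C0.
Proof. rewrite <- (hscal_C0 hzero), inner_scall. cq. Qed.

Lemma inner_zero_r {X : Hilbert} (y : X) : inner y hzero = C0.
Proof. rewrite inner_conj, inner_zero_l. cq. Qed.

Lemma inner_addr {X : Hilbert} (x y z : X) : inner x (hadd y z) = Cadd (inner x y) (inner x z).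
Proof. rewrite inner_conj, inner_addl, (inner_conj X y x), (inner_conj X z x). cq. Qed.

Lemma inner_scalr {X : Hilbert} a (x y : X) : inner x (hscal a y) = Cmul (Cconj a) (inner x y).
Proof. rewrite inner_conj, inner_scall, (inner_conj X y x). cq. Qed.

Lemma hsub_zero_eq {X : Hilbert} (v w : X) : hsub X v w = hzero -> v = w.
Proof.
  unfold hsub; intros E.
  assert (E2 : hadd (hadd v (hscal Cneg1 w)) w = hadd hzero w) by (rewrite E; reflexivity).
  rewrite <- hadd_assoc, (hadd_comm X (hscal Cneg1 w) w), hadd_opp, hadd_zero in E2.
  rewrite E2, hadd_comm, hadd_zero. reflexivity.
Qed.

Definition rip {X : Hilbert} (x y : X) : R := Re (inner x y).
Definition nsq {X : Hilbert} (x : X) : R := rip x x.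
Definition rs {X : Hilbert} (r : R) (x : X) : X := hscal (mkC r 0) x.

Lemma rip_sym {X : Hilbert} (x y : X) : rip x y = rip y x.
Proof. unfold rip. rewrite (inner_conj X x y). reflexivity. Qed.
Lemma rip_addl {X : Hilbert} (x y z : X) : rip (hadd x y) z = rip x z + rip y z.
Proof. unfold rip. rewrite inner_addl. reflexivity. Qed.
Lemma rip_addr {X : Hilbert} (x y z : X) : rip z (hadd x y) = rip z x + rip z y.
Proof. unfold rip. rewrite inner_addr. reflexivity. Qed.
Lemma rip_scall {X : Hilbert} r (x z : X) : rip (hscal (mkC r 0) x) z = r * rip x z.
Proof. unfold rip. rewrite inner_scall. simpl. ring. Qed.
Lemma rip_scalr {X : Hilbert} r (x z : X) : rip z (hscal (mkC r 0) x) = r * rip z x.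
Proof. unfold rip. rewrite inner_scalr. simpl. ring. Qed.

Ltac rexp := unfold nsq, hsub, rs, Cneg1 in *;
  repeat (rewrite ?rip_addl, ?rip_addr, ?rip_scall, ?rip_scalr in *).

Lemma nsq_pos {X : Hilbert} (x : X) : 0 <= nsq x.
Proof. apply inner_pos. Qed.

Lemma nsq_zero {X : Hilbert} (x : X) : nsq x = 0 -> x = hzero.
Proof.
  intro E. apply inner_def. apply Ceq; [exact E|].
  pose proof (inner_conj X x x) as F. apply (f_equal Im) in F. simpl in *. lra.
Qed.

Lemma hnorm_nsq {X : Hilbert} (x : X) : hnorm X x = sqrt (nsq x).
Proof. reflexivity. Qed.

Lemma sqrt_lt_sq a e : 0 <= a -> 0 < e -> (sqrt a < e <-> a < e * e).
Proof.
  intros Ha He; split; intro H.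
  - rewrite <- (sqrt_sqrt a Ha). pose proof (sqrt_pos a). nra.
  - rewrite <- (sqrt_square e) by lra. apply sqrt_lt_1_alt. lra.
Qed.

Lemma CS {X : Hilbert} (x y : X) : rip x y * rip x y <= nsq x * nsq y.
Proof.
  destruct (Req_dec (nsq y) 0) as [E|E].
  - apply nsq_zero in E. subst. unfold rip. rewrite inner_zero_r. simpl.
    pose proof (nsq_pos x). pose proof (nsq_pos (@hzero X)). nra.
  - set (t := rip x y / nsq y).
    pose proof (nsq_pos (hadd x (rs (- t) y))) as P.
    rexp. rewrite (rip_sym y x) in P.
    pose proof (nsq_pos y). unfold nsq in *.
    assert (Hy : 0 < rip y y) by lra.
    assert (t * rip y y = rip x y) by (unfold t; field; lra).
    nra.
Qed.

Lemma conv_nsq {X : Hilbert} (u : nat -> X) l : converges X u l ->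
  forall c, 0 < c -> exists N, forall n, (N <= n)%nat -> nsq (hsub X (u n) l) < c.
Proof.
  intros Hc c Hc0. destruct (Hc (sqrt c)) as [N HN]. apply sqrt_lt_R0; lra.
  exists N; intros n Hn. specialize (HN n Hn). rewrite hnorm_nsq in HN.
  apply sqrt_lt_sq in HN; [|apply nsq_pos|apply sqrt_lt_R0; lra].
  rewrite sqrt_sqrt in HN; lra.
Qed.

Lemma nsq_conv {X : Hilbert} (u : nat -> X) l :
  (forall c, 0 < c -> exists N, forall n, (N <= n)%nat -> nsq (hsub X (u n) l) < c) ->
  converges X u l.
Proof.
  intros Hc e He. destruct (Hc (e*e)) as [N HN]. nra.
  exists N; intros n Hn. rewrite hnorm_nsq. apply sqrt_lt_sq; auto. apply nsq_pos.
Qed.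

Lemma small_inv e : 0 < e -> exists N, forall n, (N <= n)%nat -> / (INR n + 1) < e.
Proof.
  intros He. destruct (archimed_cor1 e He) as [N [H1 H2]]. exists N. intros n Hn.
  apply le_INR in Hn. assert (0 < INR N) by (apply lt_0_INR; lia).
  apply Rle_lt_trans with (/ INR N); auto. apply Rinv_le_contravar; lra.
Qed.

Ltac syms := repeat match goal with
  | |- context [rip ?a ?b] => progress (first [ assert (rip a b = rip b a) by apply rip_sym | idtac ]) end.

Lemma proj {X : Hilbert} (M : X -> Prop) (m0 : X) (Hm0 : M m0)
  (Madd : forall a b, M a -> M b -> M (hadd a b))
  (Mscal : forall r a, M a -> M (rs r a)) (x : X)
  (Hx : forall w, (forall m, M m -> rip m w = 0) -> rip x w = 0) :
  exists u : nat -> X, (forall n, M (u n)) /\ converges X u x.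
Proof.
  set (E := fun r => exists m, M m /\ r = - nsq (hsub X x m)).
  assert (Eb : bound E).
  { exists 0. intros r [m [_ ->]]. pose proof (nsq_pos (hsub X x m)). lra. }
  assert (Ene : exists r, E r) by (exists (- nsq (hsub X x m0)); exists m0; auto).
  destruct (completeness E Eb Ene) as [L [HL1 HL2]].
  set (d2 := - L).
  assert (low : forall m, M m -> d2 <= nsq (hsub X x m)).
  { intros m Hm. assert (E (- nsq (hsub X x m))) by (exists m; auto).
    apply HL1 in H. unfold d2; lra. }
  assert (appr : forall e, 0 < e -> exists m, M m /\ nsq (hsub X x m) < d2 + e).
  { intros e He. apply NNPP; intro N.
    assert (is_upper_bound E (L - e)).
    { intros r [m [Hm ->]]. apply Rnot_lt_le. intro C1. apply N. exists m. split; auto.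
      unfold d2; lra. }
    apply HL2 in H. lra. }
  assert (seq : forall n : nat, exists m, M m /\ nsq (hsub X x m) < d2 + / (INR n + 1)).
  { intro n. apply appr. apply Rinv_0_lt_compat. pose proof (pos_INR n); lra. }
  set (u := fun n => proj1_sig (constructive_indefinite_description _ (seq n))).
  assert (Hu : forall n, M (u n) /\ nsq (hsub X x (u n)) < d2 + / (INR n + 1)).
  { intro n. unfold u. destruct constructive_indefinite_description; auto. }
  assert (cau : forall m n, nsq (hsub X (u m) (u n)) <= 2 * / (INR m + 1) + 2 * / (INR n + 1)).
  { intros m n. destruct (Hu m) as [Mm Dm]. destruct (Hu n) as [Mn Dn].
    pose proof (low _ (Mscal (/2) _ (Madd _ _ Mm Mn))) as Lo.
    rexp. pose proof (rip_sym x (u m)). pose proof (rip_sym x (u n)).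
    pose proof (rip_sym (u n) (u m)). lra. }
  destruct (hcomplete X u) as [p Hp].
  { intros e He. destruct (small_inv (e * e / 4)) as [N HN]. nra.
    exists N. intros m n Hm Hn. change (hnorm X (hsub X (u m) (u n)) < e).
    rewrite hnorm_nsq. apply sqrt_lt_sq; auto. apply nsq_pos.
    pose proof (cau m n). pose proof (HN m Hm). pose proof (HN n Hn). lra. }
  assert (Cp : converges X u p) by exact Hp.
  pose proof (conv_nsq u p Cp) as Cn.
  assert (orth : forall m, M m -> rip m (hsub X x p) = 0).
  { intros m Hm. set (a := nsq m).
    destruct (Req_dec a 0) as [Ea|Ea].
    { apply nsq_zero in Ea. rewrite Ea. unfold rip. rewrite inner_zero_l. reflexivity. }
    assert (Ha : 0 < a) by (pose proof (nsq_pos m); unfold a in *; lra).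
    set (b := rip m (hsub X x p)).
    destruct (Req_dec b 0) as [Eb0|Eb0]; [exact Eb0|exfalso].
    set (t := b / a). set (dl := b * b / a).
    assert (Hdl : 0 < dl) by (unfold dl; apply Rdiv_lt_0_compat; nra).
    assert (Ht : t <> 0) by (unfold t; intro; apply Eb0; apply (f_equal (fun z => z * a)) in H;
      field_simplify in H; lra).
    destruct (small_inv (dl / 2)) as [N1 HN1]. lra.
    destruct (Cn (dl * dl / (16 * (t * t) * a))) as [N2 HN2].
    { apply Rdiv_lt_0_compat. nra. assert (0 < t * t) by nra. nra. }
    set (n := max N1 N2).
    specialize (HN1 n ltac:(lia)). specialize (HN2 n ltac:(lia)).
    destruct (Hu n) as [Mn Dn].
    pose proof (low _ (Madd _ _ Mn (Mscal t _ Hm))) as Lo.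
    pose proof (CS m (hsub X p (u n))) as Cs.
    assert (Eq1 : nsq (hsub X p (u n)) = nsq (hsub X (u n) p)) by (rexp; pose proof (rip_sym p (u n)); lra).
    rewrite Eq1 in Cs.
    set (r := rip m (hsub X p (u n))) in *.
    assert (Ebb : b = rip m x - rip m p) by (unfold b; rexp; lra).
    assert (Er : r = rip m p - rip m (u n)) by (unfold r; rexp; lra).
    set (q := nsq (hsub X (u n) p)) in *.
    assert (Ex : nsq (hsub X x (hadd (u n) (rs t m))) =
       nsq (hsub X x (u n)) - 2 * t * (b + r) + t * t * a).
    { rewrite Ebb, Er. unfold a. rexp. pose proof (rip_sym x (u n)). pose proof (rip_sym x m).
      rewrite (rip_sym x m), (rip_sym (u n) m). ring. }
    assert (Key : dl <= / (INR n + 1) - 2 * t * r).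
    { assert (H3 : -2*t*b + t*t*a = - dl) by (unfold dl, t; field; lra).
      assert (H4 : nsq (hsub X x (hadd (u n) (rs t m))) =
        nsq (hsub X x (u n)) + (-2*t*b + t*t*a) - 2*t*r) by (rewrite Ex; ring).
      rewrite H3 in H4. lra. }
    assert (Hq : 4 * (t * t) * (r * r) < dl * dl / 4).
    { assert (r * r <= a * q) by (unfold a; lra).
      assert (0 < t * t) by nra.
      assert (q * (16 * (t * t) * a) < dl * dl).
      { assert (K: 0 < 16*(t*t)*a) by nra.
        pose proof (Rmult_lt_compat_r _ _ _ K HN2) as HH.
        replace (dl * dl / (16 * (t * t) * a) * (16 * (t * t) * a)) with (dl*dl) in HH
          by (field; repeat split; auto; lra). exact HH. }
      nra. }
    assert (- 2 * t * r < dl / 2) by nra.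
    lra. }
  assert (Hw := Hx _ orth).
  remember (hsub X x p) as w eqn:Ew.
  assert (Nw : nsq w = 0).
  { assert (E1 : nsq w = rip x w - rip p w) by (unfold nsq; rewrite Ew at 1; unfold hsub, Cneg1;
      rewrite rip_addl, rip_scall; ring).
    apply NNPP; intro Nz. pose proof (nsq_pos w).
    destruct (Cn (nsq w)) as [N HN]; [lra|]. specialize (HN N (le_n _)).
    destruct (Hu N) as [MN _].
    pose proof (orth _ MN) as O.
    pose proof (CS (hsub X p (u N)) w) as Cs.
    assert (E2 : rip (hsub X p (u N)) w = rip p w - rip (u N) w) by
      (unfold hsub, Cneg1; rewrite rip_addl, rip_scall; ring).
    assert (Eq1 : nsq (hsub X p (u N)) = nsq (hsub X (u N) p)) by (rexp; pose proof (rip_sym p (u N)); lra).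
    rewrite E2, O, Eq1 in Cs. rewrite Hw in E1.
    assert (0 < nsq w) by lra. nra. }
  apply nsq_zero in Nw. subst w. apply hsub_zero_eq in Nw. subst p.
  exists u. split; [intro n; apply Hu | exact Cp].
Qed.


Definition padd {X : Hilbert} (p q : X * X) : X * X := (hadd (fst p) (fst q), hadd (snd p) (snd q)).
Definition pscal {X : Hilbert} a (p : X * X) : X * X := (hscal a (fst p), hscal a (snd p)).
Definition pinner {X : Hilbert} (p q : X * X) : C := Cadd (inner (fst p) (fst q)) (inner (snd p) (snd q)).

Lemma sqrt_add_le a b : 0 <= a -> 0 <= b -> sqrt a <= sqrt (a + b).
Proof. intros; apply sqrt_le_1_alt; lra. Qed.

Definition prodH (X : Hilbert) : Hilbert.
Proof.
  refine (Build_Hilbert (X * X) (hzero, hzero) padd pscal pinner _ _ _ _ _ _ _ _ _ _ _ _ _ _).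
  - intros [] [] []; unfold padd; simpl; f_equal; apply hadd_assoc.
  - intros [] []; unfold padd; simpl; f_equal; apply hadd_comm.
  - intros []; unfold padd; simpl; f_equal; apply hadd_zero.
  - intros []; unfold padd, pscal; simpl; f_equal; apply hadd_opp.
  - intros []; unfold pscal; simpl; f_equal; apply hscal_one.
  - intros a b []; unfold pscal; simpl; f_equal; apply hscal_assoc.
  - intros a [] []; unfold padd, pscal; simpl; f_equal; apply hscal_addr.
  - intros a b []; unfold padd, pscal; simpl; f_equal; apply hscal_addl.
  - intros [] [] []; unfold padd, pinner; simpl; rewrite !inner_addl; cq.
  - intros a [] []; unfold pscal, pinner; simpl; rewrite !inner_scall; cq.
  - intros [x1 x2] [y1 y2]; unfold pinner; simpl; rewrite (inner_conj X x1), (inner_conj X x2); cq.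
  - intros [x1 x2]; unfold pinner; simpl; pose proof (inner_pos X x1); pose proof (inner_pos X x2); lra.
  - intros [x y] E; unfold pinner in E; simpl in E.
    pose proof (nsq_pos x); pose proof (nsq_pos y). unfold nsq, rip in *.
    apply (f_equal Re) in E; simpl in E.
    assert (nsq x = 0) by (unfold nsq, rip; lra). assert (nsq y = 0) by (unfold nsq, rip; lra).
    apply nsq_zero in H1, H2. subst; reflexivity.
  - intros u Hu.
    assert (Hc1 : forall c, 0 < c -> exists N, forall m n, (N <= m)%nat -> (N <= n)%nat ->
       nsq (hsub X (fst (u m)) (fst (u n))) < c /\ nsq (hsub X (snd (u m)) (snd (u n))) < c).
    { intros c Hc. destruct (Hu (sqrt c)) as [N HN]. apply sqrt_lt_R0; lra.
      exists N. intros m n Hm Hn. specialize (HN m n Hm Hn). unfold pinner, padd, pscal in HN; simpl in HN.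
      apply sqrt_lt_sq in HN; [|pose proof (nsq_pos (hsub X (fst (u m)) (fst (u n))));
         pose proof (nsq_pos (hsub X (snd (u m)) (snd (u n)))); unfold nsq, rip, hsub in *; lra
        | apply sqrt_lt_R0; lra].
      rewrite sqrt_sqrt in HN by lra.
      pose proof (nsq_pos (hsub X (fst (u m)) (fst (u n))));
         pose proof (nsq_pos (hsub X (snd (u m)) (snd (u n)))); unfold nsq, rip, hsub in *; lra. }
    destruct (hcomplete X (fun n => fst (u n))) as [l1 Hl1].
    { intros e He. destruct (Hc1 (e*e)) as [N HN]. nra. exists N. intros m n Hm Hn.
      change (sqrt (nsq (hsub X (fst (u m)) (fst (u n)))) < e). apply sqrt_lt_sq; auto. apply nsq_pos.
      apply HN; auto. }
    destruct (hcomplete X (fun n => snd (u n))) as [l2 Hl2].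
    { intros e He. destruct (Hc1 (e*e)) as [N HN]. nra. exists N. intros m n Hm Hn.
      change (sqrt (nsq (hsub X (snd (u m)) (snd (u n)))) < e). apply sqrt_lt_sq; auto. apply nsq_pos.
      apply HN; auto. }
    exists (l1, l2). intros e He.
    destruct (conv_nsq _ _ Hl1 (e*e/2)) as [N1 H1]. nra.
    destruct (conv_nsq _ _ Hl2 (e*e/2)) as [N2 H2]. nra.
    exists (max N1 N2). intros n Hn. unfold pinner, padd, pscal; simpl.
    specialize (H1 n ltac:(lia)). specialize (H2 n ltac:(lia)).
    apply sqrt_lt_sq; auto.
    + pose proof (nsq_pos (hsub X (fst (u n)) l1)); pose proof (nsq_pos (hsub X (snd (u n)) l2)).
      unfold nsq, rip, hsub in *; lra.
    + unfold nsq, rip, hsub in *; lra.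
Defined.

Lemma prod_conv {X : Hilbert} (q : nat -> X * X) x y :
  converges (prodH X) q (x, y) -> converges X (fun n => fst (q n)) x /\ converges X (fun n => snd (q n)) y.
Proof.
  intros Hc; split; intros e He; destruct (Hc e He) as [N HN]; exists N; intros n Hn;
  specialize (HN n Hn); unfold hnorm in *; simpl in HN; unfold pinner, padd, pscal in HN; simpl in HN;
  eapply Rle_lt_trans; try exact HN; apply sqrt_le_1_alt;
  [pose proof (nsq_pos (hsub X (snd (q n)) y)) | pose proof (nsq_pos (hsub X (fst (q n)) x))];
  unfold nsq, rip, hsub in *; simpl; lra.
Qed.

Lemma lin_zero {X : Hilbert} (T : Op X) : linear_op X T -> app T hzero = hzero.
Proof.
  intros [H0 [_ Hs]]. destruct (Hs C0 hzero H0) as [_ E]. rewrite hscal_C0 in E.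
  rewrite E, hscal_C0. reflexivity.
Qed.

Lemma lin_add {X : Hilbert} (T : Op X) x y : linear_op X T -> dom T x -> dom T y ->
  dom T (hadd x y) /\ app T (hadd x y) = hadd (app T x) (app T y).
Proof. intros [_ [Ha _]]; apply Ha. Qed.

Lemma lin_scal {X : Hilbert} (T : Op X) a x : linear_op X T -> dom T x ->
  dom T (hscal a x) /\ app T (hscal a x) = hscal a (app T x).
Proof. intros [_ [_ Hs]]; apply Hs. Qed.

Lemma lin_sub {X : Hilbert} (T : Op X) x y : linear_op X T -> dom T x -> dom T y ->
  dom T (hsub X x y) /\ app T (hsub X x y) = hsub X (app T x) (app T y).
Proof.
  intros L Hx Hy. unfold hsub. destruct (lin_scal T Cneg1 y L Hy) as [D1 E1].
  destruct (lin_add T _ _ L Hx D1) as [D2 E2]. rewrite E2, E1. auto.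
Qed.

Lemma adj_spec {X : Hilbert} (T : Op X) y : dom (adjoint X T) y ->
  forall xi, dom T xi -> inner (app T xi) y = inner xi (app (adjoint X T) y).
Proof.
  intros Hy. simpl. apply (epsilon_spec (inhabits hzero)
     (fun z => forall xi, dom T xi -> inner (app T xi) y = inner xi z)). exact Hy.
Qed.

Lemma nsq_sub_sym {X : Hilbert} (a b : X) : nsq (hsub X a b) = nsq (hsub X b a).
Proof. rexp. rewrite (rip_sym a b). ring. Qed.

Lemma dense_eq {X : Hilbert} (T : Op X) v v' : densely_defined X T ->
  (forall xi, dom T xi -> inner xi v = inner xi v') -> v = v'.
Proof.
  intros Hd He. apply hsub_zero_eq. set (d := hsub X v v').
  assert (O : forall xi, dom T xi -> rip xi d = 0).
  { intros xi Hxi. unfold d, rip, hsub. rewrite inner_addr, inner_scalr, He by auto. simpl. ring. }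
  apply nsq_zero. apply NNPP; intro Nz. pose proof (nsq_pos d).
  destruct (Hd d (sqrt (nsq d))) as [xi [Hxi Hn]]. apply sqrt_lt_R0; lra.
  rewrite hnorm_nsq in Hn. apply sqrt_lt_0_alt in Hn.
  pose proof (CS (hsub X d xi) d) as Cs.
  assert (E : rip (hsub X d xi) d = nsq d).
  { unfold hsub, Cneg1. rewrite rip_addl, rip_scall, (O xi Hxi). unfold nsq. ring. }
  rewrite E in Cs. nra.
Qed.

Lemma adj_char {X : Hilbert} (T : Op X) eta z : densely_defined X T ->
  (forall xi, dom T xi -> inner (app T xi) eta = inner xi z) ->
  dom (adjoint X T) eta /\ app (adjoint X T) eta = z.
Proof.
  intros Hd Hz. assert (D : dom (adjoint X T) eta) by (exists z; exact Hz).
  split; auto. apply (dense_eq T _ _ Hd). intros xi Hxi. rewrite <- adj_spec by auto. auto.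
Qed.

Lemma Gsym {X : Hilbert} (G : Op X) : bounded_op X G -> metric_operator X G ->
  forall x y, inner (app G x) y = inner x (app G y).
Proof.
  intros [Hb _] [_ [[Hs1 Hs2] _]] x y.
  assert (D : dom (adjoint X G) y) by (apply Hs1; apply Hb).
  rewrite (adj_spec G y D x (Hb x)), Hs2 by apply Hb. reflexivity.
Qed.

Lemma Ginj {X : Hilbert} (G : Op X) : bounded_op X G -> metric_operator X G ->
  forall x y, app G x = app G y -> x = y.
Proof.
  intros Hb Hm x y E. destruct Hm as [L [_ P]]. apply hsub_zero_eq.
  apply NNPP; intro N. specialize (P _ (proj1 Hb _) N).
  destruct (lin_sub G x y L (proj1 Hb _) (proj1 Hb _)) as [_ E2].
  rewrite E2, E in P. unfold hsub in P. rewrite hadd_opp, inner_zero_l in P. simpl in P. lra.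
Qed.

Lemma conv_ext {X : Hilbert} (f g : nat -> X) l : (forall n, f n = g n) -> converges X f l -> converges X g l.
Proof. intros E Hc e He. destruct (Hc e He) as [N HN]. exists N. intros n Hn. rewrite <- E. auto. Qed.

Lemma F2f {X : Hilbert} (G A : Op X) : bounded_op X G -> metric_operator X G ->
  forall eta, dom (star_op X G A) eta -> forall xi, dom A xi ->
  inner (app G (app A xi)) eta = inner (app G xi) (app (star_op X G A) eta).
Proof.
  intros Hb Hm eta [D1 D2] xi Hxi. simpl.
  assert (Sp : dom G (epsilon (inhabits hzero) (fun x => dom G x /\ app G x = app (adjoint X A) (app G eta)))
    /\ app G (epsilon (inhabits hzero) (fun x => dom G x /\ app G x = app (adjoint X A) (app G eta)))
       = app (adjoint X A) (app G eta)).
  { apply (epsilon_spec (inhabits hzero) (fun x => dom G x /\ app G x = app (adjoint X A) (app G eta))).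
    exact D2. }
  rewrite (Gsym G Hb Hm (app A xi) eta), (adj_spec A (app G eta) D1 xi Hxi), <- (proj2 Sp), (Gsym G Hb Hm xi). reflexivity.
Qed.

Lemma F2c {X : Hilbert} (G A : Op X) : bounded_op X G -> metric_operator X G -> densely_defined X A ->
  forall eta z, (forall xi, dom A xi -> inner (app G (app A xi)) eta = inner (app G xi) z) ->
  dom (star_op X G A) eta /\ app (star_op X G A) eta = z.
Proof.
  intros Hb Hm Hd eta z Hz.
  destruct (adj_char A (app G eta) (app G z) Hd) as [D1 E1].
  { intros xi Hxi. rewrite <- Gsym, Hz, Gsym by auto. reflexivity. }
  assert (D2 : dom (op_inverse X G) (app (adjoint X A) (app G eta))).
  { rewrite E1. exists z. split; auto. apply Hb. }
  split. split; auto.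
  unfold star_op, op_inverse; cbn [app]. pose proof (epsilon_spec (inhabits hzero) (fun x => dom G x /\ app G x = app (adjoint X A) (app G eta)) D2) as [_ Sp].
  rewrite E1 in Sp. apply (Ginj G Hb Hm) in Sp. rewrite E1. exact Sp.
Qed.

Lemma real_to_complex {X : Hilbert} (M : X -> Prop) w :
  (forall m, M m -> M (hscal (mkC 0 1) m)) -> (forall m, M m -> rip m w = 0) ->
  forall m, M m -> inner m w = C0.
Proof.
  intros Hi Hr m Hm. pose proof (Hr _ Hm) as E1. pose proof (Hr _ (Hi _ Hm)) as E2.
  unfold rip in *. rewrite inner_scall in E2. simpl in E2. apply Ceq; simpl; lra.
Qed.

Theorem lemma5p8 (H : Hilbert) (A B G : Op H) :
  linear_op H A -> closed_op H A -> densely_defined H A ->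
  linear_op H B -> closed_op H B -> densely_defined H B ->
  bounded_op H G -> metric_operator H G ->
  intertwines H G A B ->
  densely_defined H (star_op H G A) /\
  intertwines H G A (adjoint H (star_op H G A)) /\
  (forall B' : Op H, linear_op H B' -> closed_op H B' -> intertwines H G A B' ->
     op_incl H (adjoint H (star_op H G A)) B') /\
  is_core H (adjoint H (star_op H G A)) (fun y => exists xi, dom A xi /\ y = app G xi).
Proof.
  intros HlA HcA HdA HlB HcB HdB Hb Hm Hint.
  set (S := star_op H G A).
  assert (LG : linear_op H G) by apply Hm.
  assert (DG : forall x, dom G x) by apply Hb.
  set (M := fun p : prodH H => exists xi, dom A xi /\ p = (app G xi, app G (app A xi))).
  assert (Mne : M (app G hzero, app G (app A hzero))) by (exists hzero; split; auto; apply HlA).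
  assert (Madd : forall a b, M a -> M b -> M (hadd a b)).
  { intros a b [x1 [H1 ->]] [x2 [H2 ->]].
    destruct (lin_add A x1 x2 HlA H1 H2) as [D E].
    exists (hadd x1 x2); split; auto. simpl. unfold padd; simpl.
    rewrite E. destruct (lin_add G x1 x2 LG (DG _) (DG _)) as [_ E1].
    destruct (lin_add G (app A x1) (app A x2) LG (DG _) (DG _)) as [_ E2].
    rewrite E1, E2. reflexivity. }
  assert (Mscal : forall c a, M a -> M (hscal c a)).
  { intros c a [x1 [H1 ->]].
    destruct (lin_scal A c x1 HlA H1) as [D E].
    exists (hscal c x1); split; auto. simpl. unfold pscal; simpl.
    rewrite E. destruct (lin_scal G c x1 LG (DG _)) as [_ E1].
    destruct (lin_scal G c (app A x1) LG (DG _)) as [_ E2].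
    rewrite E1, E2. reflexivity. }
  assert (Mperp : forall a b : H, (forall m, M m -> rip m ((a, b) : prodH H) = 0) ->
     dom S b /\ app S b = hscal Cneg1 a).
  { intros a b Hr.
    assert (Hc := real_to_complex M ((a, b) : prodH H) (fun m Hm => Mscal _ m Hm) Hr).
    apply (F2c G A Hb Hm HdA). intros xi Hxi.
    assert (Mx : M (app G xi, app G (app A xi))) by (exists xi; auto).
    specialize (Hc _ Mx). simpl in Hc. unfold pinner in Hc; simpl in Hc.
    rewrite inner_scalr. apply (f_equal Re) in Hc as Hre. apply (f_equal Im) in Hc as Him.
    simpl in Hre, Him. apply Ceq; simpl; lra. }
  assert (DS0 : dom S hzero).
  { apply (F2c G A Hb Hm HdA hzero hzero). intros. rewrite !inner_zero_r. reflexivity. }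
  assert (DSadd : forall a b, dom S a -> dom S b -> dom S (hadd a b)).
  { intros a b Ha Hb'. apply (F2c G A Hb Hm HdA _ (hadd (app S a) (app S b))).
    intros xi Hxi. rewrite !inner_addr, !(F2f G A Hb Hm) by auto. reflexivity. }
  assert (DSscal : forall c a, dom S a -> dom S (hscal c a)).
  { intros c a Ha. apply (F2c G A Hb Hm HdA _ (hscal c (app S a))).
    intros xi Hxi. rewrite !inner_scalr, !(F2f G A Hb Hm) by auto. reflexivity. }
  assert (Dense : densely_defined H S).
  { intros x eps Heps.
    destruct (proj (dom S) hzero DS0 DSadd (fun r a Ha => DSscal _ a Ha) x) as [u [Hu Cu]].
    - intros w Hw.
      assert (Hwc := real_to_complex (dom S) w (fun m Hm => DSscal _ m Hm) Hw).
      assert (W0 : w = hzero).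
      { destruct (proj M _ Mne Madd (fun r a Ha => Mscal _ a Ha) ((hzero, w) : prodH H)) as [q [Mq Cq]].
        - intros [a b] Hab. destruct (Mperp a b Hab) as [Db _].
          specialize (Hwc _ Db). unfold rip; simpl; unfold pinner; simpl.
          rewrite inner_zero_l, (inner_conj H b w), Hwc. simpl. ring.
        - apply prod_conv in Cq as [C1 C2].
          assert (PQ : forall n, dom B (fst (q n)) /\ app B (fst (q n)) = snd (q n)).
          { intro n. destruct (Mq n) as [xi [Hxi ->]]. simpl. apply Hint; auto. }
          destruct (HcB (fun n => fst (q n)) hzero w (fun n => proj1 (PQ n)) C1) as [_ E].
          { apply (conv_ext (fun n => snd (q n))); auto. intro n. symmetry; apply PQ. }
          rewrite lin_zero in E by auto. auto. }
      subst w. unfold rip. rewrite inner_zero_r. reflexivity.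
    - destruct (Cu eps Heps) as [N HN]. exists (u N). split; auto.
      specialize (HN N (le_n _)). rewrite hnorm_nsq, nsq_sub_sym in HN. exact HN. }
  assert (Int : intertwines H G A (adjoint H S)).
  { intros xi Hxi. apply (adj_char S _ _ Dense). intros v Hv.
    pose proof (F2f G A Hb Hm v Hv xi Hxi) as F. fold S in F.
    rewrite (inner_conj H (app G xi) (app S v)), <- F,
      (inner_conj H (app G (app A xi)) v). reflexivity. }
  assert (Core : is_core H (adjoint H S) (fun y => exists xi, dom A xi /\ y = app G xi)).
  { split.
    - intros y [xi [Hxi ->]]. apply Int; auto.
    - intros x Hx. set (y := app (adjoint H S) x).
      destruct (proj M _ Mne Madd (fun r a Ha => Mscal _ a Ha) ((x, y) : prodH H)) as [q [Mq Cq]].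
      + intros [a b] Hab. destruct (Mperp a b Hab) as [Db Eb].
        pose proof (adj_spec S x Hx b Db) as Ad. fold y in Ad. rewrite Eb, inner_scall in Ad.
        unfold rip; simpl; unfold pinner; simpl.
        apply (f_equal Re) in Ad. simpl in Ad.
        pose proof (rip_sym a x). pose proof (rip_sym b y). unfold rip in *. lra.
      + apply prod_conv in Cq as [C1 C2].
        exists (fun n => fst (q n)). split; [|split; auto].
        * intro n. destruct (Mq n) as [xi [Hxi ->]]. exists xi; auto.
        * apply (conv_ext (fun n => snd (q n))); auto. intro n.
          destruct (Mq n) as [xi [Hxi ->]]. simpl. symmetry. apply Int; auto. }
  split; [exact Dense|split; [exact Int|split; [|exact Core]]].
  intros B' HlB' HcB' HiB' x Hx.
  destruct Core as [_ C2]. destruct (C2 x Hx) as [u [Du [Cu Cau]]].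
  assert (PU : forall n, dom B' (u n) /\ app B' (u n) = app (adjoint H S) (u n)).
  { intro n. destruct (Du n) as [xi [Hxi ->]]. destruct (HiB' xi Hxi) as [D1 E1].
    destruct (Int xi Hxi) as [_ E2]. rewrite E1, E2. auto. }
  apply (HcB' u x _ (fun n => proj1 (PU n)) Cu).
  apply (conv_ext _ _ _ (fun n => eq_sym (proj2 (PU n))) Cau).
Qed.
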